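(* Let $G=(V,E,w)$ be an undirected graph with positive real edge weights, $s\in V$, $f\ge1$ an integer, and let $T$, $w'$, $H$ be as in the context. Let $F\subseteq E$ with $|F|\le f$, let $t\in V$ be reachable from $s$ in $G-F$, let $\pi$ be a shortest path from $s$ to $t$ in $G-F$ and $N$ the set of new edges of $\pi$. Let $M$ be a minimum spanning forest of $H-F$ with respect to $w'$, let $\pi'$ be the unique path from $s$ to $t$ in $M$, and let $N'$ be the set of new edges of $\pi'$. Then for every $e'\in N'$, $w'(e')\le \max_{e\in N} w'(e)$.
   Context: For a subgraph $X$ of $G$, $d_X(u,u')$ is the distance between $u,u'$ in $X$ with respect to $w$, and $d_X(u)=d_X(s,u)$. $T$ is a shortest-path tree of $G$ rooted at $s$. Define $w'(u,v)=0$ if $(u,v)\in E(T)$ and $w'(u,v)=d_T(u)+w(u,v)+d_T(v)$ otherwise; $G'=(V,E,w')$. Set $G_0=G'$; for $i=0,\dots,f$ let $M_i$ be the edge set of a minimum spanning forest of $G_i$ with respect to $w'$ and $G_{i+1}=G_i$ minus the edges of $M_i$. $H$ is the spanning subgraph of $G$ with edge set $\bigcup_{i=0}^f M_i$. $X-F$ denotes $X$ with the edges of $F$ removed. An edge is called new (with respect to $F$) if its endpoints lie in different connected components of the forest $T-F$. *)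

(* Defs.v *)
From HB Require Import structures.
From mathcomp Require Import all_boot all_order all_algebra.
From mathcomp Require Import boolp reals.
Set Implicit Arguments. Unset Strict Implicit. Unset Printing Implicit Defensive.
Import Order.TTheory GRing.Theory Num.Theory.
Local Open Scope ring_scope.

Section Graph.
Variables (V E : finType) (ends : E -> V * V).

Definition incident (e : E) (u : V) : bool := ((ends e).1 == u) || ((ends e).2 == u).
Definition other (e : E) (u : V) : V :=
  if (ends e).1 == u then (ends e).2 else (ends e).1.

Fixpoint walk (X : {set E}) (u v : V) (p : seq E) : bool :=
  match p with
  | [::] => u == v
  | e :: p' => [&& e \in X, incident e u & walk X (other e u) v p']
  end.

Fixpoint wverts (u : V) (p : seq E) : seq V :=
  match p with
  | [::] => [:: u]
  | e :: p' => u :: wverts (other e u) p'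
  end.

Definition gpath (X : {set E}) (u v : V) (p : seq E) : bool :=
  walk X u v p && uniq (wverts u p).

Definition reach (X : {set E}) (u v : V) : Prop := exists p, walk X u v p.

Definition acyclic (X : {set E}) : Prop :=
  (forall e, e \in X -> (ends e).1 != (ends e).2) /\
  (forall u v p q, gpath X u v p -> gpath X u v q -> p = q).

Definition spanning_forest (X M : {set E}) : Prop :=
  M \subset X /\ acyclic M /\ (forall u v, reach X u v -> reach M u v).

Variable R : realType.

Definition wsum (wt : E -> R) (M : {set E}) : R := \sum_(e in M) wt e.

Definition msf (wt : E -> R) (X M : {set E}) : Prop :=
  spanning_forest X M /\
  (forall M', spanning_forest X M' -> wsum wt M <= wsum wt M').

Definition wlen (w : E -> R) (p : seq E) : R := \sum_(e <- p) w e.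

Definition is_dist (w : E -> R) (X : {set E}) (u v : V) (d : R) : Prop :=
  (exists p, walk X u v p /\ wlen w p = d) /\
  (forall p, walk X u v p -> d <= wlen w p).

Definition sp_tree (w : E -> R) (s : V) (T : {set E}) : Prop :=
  acyclic T /\
  (forall e, e \in T -> reach T s (ends e).1 /\ reach T s (ends e).2) /\
  (forall u, reach setT s u -> reach T s u) /\
  (forall u d, reach T s u -> is_dist w setT s u d -> is_dist w T s u d).

Definition wmod (w : E -> R) (T : {set E}) (dT : V -> R) (e : E) : R :=
  if e \in T then 0 else dT (ends e).1 + w e + dT (ends e).2.

Fixpoint Gseq (Ms : nat -> {set E}) (i : nat) : {set E} :=
  match i with
  | 0 => setT
  | i'.+1 => Gseq Ms i' :\: Ms i'
  end.

Definition new_edge (T F : {set E}) (e : E) : Prop :=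
  ~ reach (T :\: F) (ends e).1 (ends e).2.

End Graph.

(* Main.v *)
Require Import Defs.
From HB Require Import structures.
From mathcomp Require Import all_boot all_order all_algebra.
From mathcomp Require Import boolp reals.
Set Implicit Arguments. Unset Strict Implicit. Unset Printing Implicit Defensive.
Import Order.TTheory GRing.Theory Num.Theory.
Local Open Scope ring_scope.

Lemma incidentP (V E : finType) (ends : E -> V * V) h u :
  incident ends h u ->
  (u = (ends h).1 /\ other ends h u = (ends h).2) \/
  (u = (ends h).2 /\ other ends h u = (ends h).1).
Proof.
rewrite /incident /other; case: eqP => [->|_] /=; first by left.
by move/eqP=> ->; right.
Qed.

Lemma reach_refl (V E : finType) (ends : E -> V * V) (X : {set E}) u : reach ends X u u.
Proof. by exists [::] => /=. Qed.

Lemma walk_cat (V E : finType) (ends : E -> V * V) (X : {set E}) u v w p q :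
  walk ends X u v p -> walk ends X v w q -> walk ends X u w (p ++ q).
Proof.
elim: p u => [|h p IH] u /=; first by move/eqP->.
by case/and3P=> hX hi hw hq; rewrite hX hi IH.
Qed.

Lemma reach_trans (V E : finType) (ends : E -> V * V) (X : {set E}) u v w :
  reach ends X u v -> reach ends X v w -> reach ends X u w.
Proof. by case=> p hp [q hq]; exists (p ++ q); apply: walk_cat hp hq. Qed.

Lemma reach_edge1 (V E : finType) (ends : E -> V * V) (X : {set E}) h :
  h \in X -> reach ends X (ends h).1 (ends h).2.
Proof. by move=> hX; exists [:: h]; rewrite /= hX /incident /other eqxx /=. Qed.

Lemma reach_edge2 (V E : finType) (ends : E -> V * V) (X : {set E}) h :
  h \in X -> reach ends X (ends h).2 (ends h).1.
Proof.
move=> hX; exists [:: h]; rewrite /= hX /incident /other eqxx orbT /=.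
by case: ifP => // /eqP ->.
Qed.

Lemma reach_sub (V E : finType) (ends : E -> V * V) (X Y : {set E}) u v :
  X \subset Y -> reach ends X u v -> reach ends Y u v.
Proof.
move=> sXY [p hp]; exists p; elim: p u hp => [|h p IH] u //=.
by case/and3P=> hX -> /IH ->; rewrite (subsetP sXY) .
Qed.

Lemma reach_inc (V E : finType) (ends : E -> V * V) (Y : {set E}) h u :
  reach ends Y (ends h).1 (ends h).2 -> incident ends h u ->
  reach ends Y u (other ends h u).
Proof.
move=> r /incidentP [[-> ->]|[-> ->]] //.
case: r => p; elim: p (ends h).1 => [|k p IH] a /=.
  by move/eqP->; apply: reach_refl.
case/and3P=> kY ki kw.
apply: reach_trans (IH _ kw) _.
case/incidentP: ki => [[-> ->]|[-> ->]]; [exact: reach_edge2| exact: reach_edge1].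
Qed.

Lemma reach_sym (V E : finType) (ends : E -> V * V) (X : {set E}) u v :
  reach ends X u v -> reach ends X v u.
Proof.
case=> p; elim: p u => [|h p IH] u /=; first by move/eqP->; apply: reach_refl.
case/and3P=> hX hi /IH r; apply: reach_trans r _.
case/incidentP: hi => [[-> ->]|[-> ->]]; [exact: reach_edge2| exact: reach_edge1].
Qed.

Lemma reach_closed (V E : finType) (ends : E -> V * V) (X Y : {set E}) u v p :
  walk ends X u v p -> (forall h, h \in p -> reach ends Y (ends h).1 (ends h).2) ->
  reach ends Y u v.
Proof.
elim: p u => [|h p IH] u /=; first by move=> /eqP-> _; apply: reach_refl.
case/and3P=> hX hi hw H; apply: reach_trans (IH _ hw _) => [|k kp].
  by apply: reach_inc hi; apply: H; rewrite inE eqxx.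
by apply: H; rewrite inE kp orbT.
Qed.

Lemma walk_inX (V E : finType) (ends : E -> V * V) (X : {set E}) u v p h :
  walk ends X u v p -> h \in p -> h \in X.
Proof.
elim: p u => [|k p IH] u //=; case/and3P=> kX _ kw; rewrite inE.
case/orP => [/eqP-> //|hp]; exact: (IH _ kw hp).
Qed.

Lemma walk_restrict (V E : finType) (ends : E -> V * V) (X Y : {set E}) u v p :
  walk ends X u v p -> (forall h, h \in p -> h \in Y) -> walk ends Y u v p.
Proof.
elim: p u => [|k p IH] u /=; first by move=> ->.
case/and3P=> kX ki kw H; rewrite ki.
rewrite (H k) ?inE ?eqxx //=; apply: IH kw _ => h hp; by apply: H; rewrite inE hp orbT.
Qed.

Lemma walk_reach (V E : finType) (ends : E -> V * V) (X : {set E}) u v p :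
  walk ends X u v p -> reach ends [set h | h \in p] u v.
Proof. by move=> w; exists p; apply: walk_restrict w _ => h; rewrite inE. Qed.


Lemma wverts_head (V E : finType) (ends : E -> V * V) a p : a \in wverts ends a p.
Proof. by case: p => [|h p] /=; rewrite inE eqxx. Qed.

Lemma walk_last (V E : finType) (ends : E -> V * V) (X : {set E}) u v p :
  walk ends X u v p -> v \in wverts ends u p.
Proof.
elim: p u => [|h p IH] u /=; first by move/eqP->; rewrite inE.
by case/and3P=> _ _ /IH; rewrite inE => ->; rewrite orbT.
Qed.

Lemma walk_endpt (V E : finType) (ends : E -> V * V) (X : {set E}) u v p h x :
  walk ends X u v p -> h \in p -> incident ends h x -> x \in wverts ends u p.
Proof.
elim: p u => [|k p IH] u //=; case/and3P=> _ ki kw; rewrite !inE.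
case/orP=> [/eqP ->|hp] hx; last by rewrite (IH _ kw hp hx) orbT.
case/incidentP: ki => [[eu eo]|[eu eo]]; case/incidentP: hx => [[ex _]|[ex _]].
- by rewrite ex eu eqxx.
- by rewrite ex -eo wverts_head orbT.
- by rewrite ex -eo wverts_head orbT.
- by rewrite ex eu eqxx.
Qed.

Lemma gpath_walk (V E : finType) (ends : E -> V * V) (X : {set E}) u v p :
  gpath ends X u v p -> walk ends X u v p.
Proof. by case/andP. Qed.

Lemma gpath_suffix (V E : finType) (ends : E -> V * V) (X : {set E}) x v q u :
  gpath ends X x v q -> u \in wverts ends x q -> exists q', gpath ends X u v q'.
Proof.
elim: q x => [|h q IH] x /=.
  by rewrite inE => /andP[/eqP-> _] /eqP->; exists [::]; rewrite /gpath /= eqxx.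
rewrite /gpath /= => /andP[/and3P[hX hi hw] /andP[hn hu]].
rewrite inE; case/orP=> [/eqP->|].
  by exists (h :: q); rewrite /gpath /= hX hi hw /= hu hn.
by apply: IH; rewrite /gpath hw hu.
Qed.

Lemma reach_gpath (V E : finType) (ends : E -> V * V) (X : {set E}) u v :
  reach ends X u v -> exists q, gpath ends X u v q.
Proof.
case=> p; elim: p u => [|h p IH] u /=.
  by move/eqP->; exists [::]; rewrite /gpath /= eqxx.
case/and3P=> hX hi /IH [q hq].
case hu: (u \in wverts ends (other ends h u) q); first exact: gpath_suffix hq hu.
exists (h :: q); move: hq; rewrite /gpath /= hX hi hu /=.
by case/andP=> -> ->.
Qed.

Lemma gpath_sub (V E : finType) (ends : E -> V * V) (X Y : {set E}) u v p :
  X \subset Y -> gpath ends X u v p -> gpath ends Y u v p.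
Proof.
move=> sXY /andP[w uq]; rewrite /gpath uq andbT.
exact: (walk_restrict w (fun h hp => subsetP sXY _ (walk_inX w hp))).
Qed.

Lemma nobridge_acyclic (V E : finType) (ends : E -> V * V) (X : {set E}) :
  (forall h, h \in X -> ~ reach ends (X :\ h) (ends h).1 (ends h).2) -> acyclic ends X.
Proof.
move=> NB; split.
  by move=> h hX; apply/negP=> /eqP he; apply: (NB h hX); rewrite he; apply: reach_refl.
move=> u v p; elim: p u => [|h p IH] u q.
  case/andP=> /= /eqP <- _; case: q => [//|h' q] /andP[/= /and3P[_ _ w] /andP[/negP nu _]].
  by case: nu; apply: walk_last w.
case: q => [|h' q].
  case/andP=> /= /and3P[_ _ w] /andP[/negP nu _] /andP[/= /eqP eu _]; exfalso.
  by case: nu; rewrite {1}eu; apply: walk_last w.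
case/andP=> /= /and3P[hX hi w] /andP[nu uq].
case/andP=> /= /and3P[hX' hi' w'] /andP[nu' uq'].
have [eh|hh] := eqVneq h h'.
  subst h'; congr (_ :: _); apply: (IH (other ends h u)); by rewrite /gpath ?w ?w' ?uq ?uq'.
exfalso.
have hq: h \notin h' :: q.
  rewrite inE (negbTE hh) /=; apply/negP=> hq.
  by move/negP: nu'; apply; apply: walk_endpt w' hq hi.
have hp: h \notin p.
  by apply/negP=> hp'; move/negP: nu; apply; apply: walk_endpt w hp' hi.
have wq : walk ends X u v (h' :: q) by rewrite /= hX' hi' w'.
have r1 : reach ends (X :\ h) u v.
  exists (h' :: q); apply: (walk_restrict wq) => k kq.
  rewrite !inE (walk_inX wq kq) andbT.
  by apply/negP=> /eqP ek; move: hq; rewrite -ek kq.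
have r2 : reach ends (X :\ h) (other ends h u) v.
  exists p; apply: (walk_restrict w) => k kp.
  rewrite !inE (walk_inX w kp) andbT; apply/negP=> /eqP ek; move: hp; rewrite -ek kp.
  by [].
have r := reach_trans r1 (reach_sym r2).
apply: (NB h hX).
by case/incidentP: hi r => [[-> ->]|[-> ->]] // /reach_sym.
Qed.

Lemma walk_minus (V E : finType) (ends : E -> V * V) (X : {set E}) u v p g :
  walk ends (X :\ g) u v p -> g \notin p.
Proof. by move=> w; apply/negP=> /(walk_inX w); rewrite !inE eqxx. Qed.

Lemma gpath_avoid (V E : finType) (ends : E -> V * V) (M : {set E}) u v p g :
  acyclic ends M -> gpath ends M u v p -> g \in p -> ~ reach ends (M :\ g) u v.
Proof.
move=> [_ U] gp gin /reach_gpath [q gq].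
have gq' : gpath ends M u v q by apply: gpath_sub gq; apply: subsetDl.
move: (U _ _ _ _ gp gq') gin => ->.
by apply/negP; apply: walk_minus (gpath_walk gq).
Qed.

Lemma acyclic_nobridge (V E : finType) (ends : E -> V * V) (M : {set E}) h :
  acyclic ends M -> h \in M -> ~ reach ends (M :\ h) (ends h).1 (ends h).2.
Proof.
move=> A hM; apply: (gpath_avoid A (p := [:: h])); last by rewrite inE.
rewrite /gpath /= hM /incident /other eqxx /= eqxx /= !inE andbT.
by case: A => /(_ h hM).
Qed.


Lemma reach_split (V E : finType) (ends : E -> V * V) (Y : {set E}) g a b p :
  walk ends Y a b p ->
  reach ends (Y :\ g) a b \/
  ((reach ends (Y :\ g) a (ends g).1 \/ reach ends (Y :\ g) a (ends g).2) /\
   (reach ends (Y :\ g) (ends g).1 b \/ reach ends (Y :\ g) (ends g).2 b)).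
Proof.
elim: p a => [|h p IH] a /=; first by move/eqP->; left; apply: reach_refl.
case/and3P=> hY hi /IH IHx.
have [ehg|hg] := eqVneq h g.
  subst h; right; split.
    by case/incidentP: hi => [[-> _]|[-> _]]; [left|right]; apply: reach_refl.
  case: IHx => [r|[_ //]].
  by case/incidentP: hi r => [[_ ->]|[_ ->]]; [right|left].
have r0 : reach ends (Y :\ g) a (other ends h a).
  by apply: reach_inc hi; apply: reach_edge1; rewrite !inE hg hY.
case: IHx => [r|[[r|r] r']]; [left|right|right].
- exact: reach_trans r0 r.
- by split=> //; left; apply: reach_trans r0 r.
- by split=> //; right; apply: reach_trans r0 r.
Qed.

Lemma sf_exchange (V E : finType) (ends : E -> V * V) (X M : {set E}) g e :
  spanning_forest ends X M -> g \in M -> e \in X ->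
  ~ reach ends (M :\ g) (ends e).1 (ends e).2 ->
  spanning_forest ends X (e |: (M :\ g)).
Proof.
move=> [sMX [AM SM]] gM eX NR.
have sub1 : M :\ g \subset e |: (M :\ g) by apply: subsetUr.
have eM' : e \in e |: (M :\ g) by rewrite setU11.
split; last split.
- apply/subsetP=> k; rewrite !inE; case/orP=> [/eqP->//|/andP[_ kM]].
  exact: (subsetP sMX).
- apply: nobridge_acyclic => h; have [-> _|he] := eqVneq h e.
    move=> r; apply: NR; apply: reach_sub r; apply/subsetP=> k; rewrite !inE.
    by case/andP=> ke; rewrite (negbTE ke).
  rewrite !inE (negbTE he) /= => /andP[hg hM] [p wp].
  have sZ : (e |: (M :\ g)) :\ h :\ e \subset M :\ h.
    by apply/subsetP=> k; rewrite !inE; case/andP=> ke; rewrite (negbTE ke) /=;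
       case/andP=> -> /andP[_ ->].
  have sZ' : (e |: (M :\ g)) :\ h :\ e \subset M :\ g.
    by apply/subsetP=> k; rewrite !inE; case/andP=> ke; rewrite (negbTE ke) /=;
       case/andP=> _ /andP[-> ->].
  have hMg : reach ends (M :\ g) (ends h).1 (ends h).2.
    by apply: reach_edge1; rewrite !inE hg.
  case: (reach_split e wp) => [r|[[r1|r1] [r2|r2]]].
  + by apply: (acyclic_nobridge AM hM); apply: reach_sub sZ r.
  + by apply: (acyclic_nobridge AM hM); apply: reach_sub sZ (reach_trans r1 r2).
  + apply: NR; move/(reach_sub sZ'): r1 => r1; move/(reach_sub sZ'): r2 => r2.
    exact: reach_trans (reach_trans (reach_sym r1) hMg) (reach_sym r2).
  + apply: NR; move/(reach_sub sZ'): r1 => r1; move/(reach_sub sZ'): r2 => r2.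
    exact: reach_trans (reach_trans r2 (reach_sym hMg)) r1.
  + by apply: (acyclic_nobridge AM hM); apply: reach_sub sZ (reach_trans r1 r2).
- move=> u v /SM [p wp]; apply: (reach_closed wp) => k kp.
  have kM := walk_inX wp kp.
  have [ekg|kg] := eqVneq k g; last first.
    by apply: reach_edge1; rewrite !inE kg kM orbT.
  subst k.
  have [q wq] := SM _ _ (reach_edge1 ends eX).
  have he : reach ends (e |: (M :\ g)) (ends e).1 (ends e).2 by apply: reach_edge1.
  case: (reach_split g wq) => [r|[[r1|r1] [r2|r2]]].
  + by case: NR.
  + by case: NR; apply: reach_trans r1 r2.
  + move/(reach_sub sub1): r1 => r1; move/(reach_sub sub1): r2 => r2.
    exact: reach_trans (reach_trans (reach_sym r1) he) (reach_sym r2).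
  + move/(reach_sub sub1): r1 => r1; move/(reach_sub sub1): r2 => r2.
    exact: reach_trans (reach_trans r2 (reach_sym he)) r1.
  + by case: NR; apply: reach_trans r1 r2.
Qed.

Lemma msf_exchange (V E : finType) (ends : E -> V * V) (R : realType)
  (wt : E -> R) (X M : {set E}) g e :
  msf ends wt X M -> g \in M -> e \in X ->
  ~ reach ends (M :\ g) (ends e).1 (ends e).2 -> wt g <= wt e.
Proof.
move=> [SF Min] gM eX NR.
have [-> //|eg] := eqVneq e g.
have eMg : e \notin M :\ g.
  by apply/negP=> eM; apply: NR; apply: reach_edge1.
have := Min _ (sf_exchange SF gM eX NR).
rewrite /wsum big_setU1 //= (big_setD1 _ gM) /=.
by rewrite lerD2r.
Qed.


Lemma cycle_prop (V E : finType) (ends : E -> V * V) (R : realType)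
  (wt : E -> R) (X M : {set E}) e :
  msf ends wt X M -> e \in X ->
  exists p, walk ends M (ends e).1 (ends e).2 p /\ (forall g, g \in p -> wt g <= wt e).
Proof.
move=> hM eX; have [[sMX [AM SM]] _] := hM.
have [p gp] := reach_gpath (SM _ _ (reach_edge1 ends eX)).
exists p; split; first exact: gpath_walk gp.
move=> g gp'; apply: (msf_exchange hM) eX _.
  exact: walk_inX (gpath_walk gp) gp'.
exact: gpath_avoid AM gp gp'.
Qed.

Lemma Gseq_mono (E : finType) (Ms : nat -> {set E}) m n :
  (m <= n)%N -> Gseq Ms n \subset Gseq Ms m.
Proof.
elim: n m => [|n IH] m; first by rewrite leqn0 => /eqP->.
rewrite leq_eqVlt => /orP[/eqP->//|]; rewrite ltnS => /IH.
by apply: subset_trans; apply: subsetDl.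
Qed.

Lemma bottleneck (V E : finType) (ends : E -> V * V) (R : realType)
  (wt : E -> R) (f : nat) (Ms : nat -> {set E})
  (hMs : forall i, (i <= f)%N -> msf ends wt (Gseq Ms i) (Ms i))
  (F : {set E}) (hF : (#|F| <= f)%N) e :
  e \in ~: F ->
  reach ends (((\bigcup_(i < f.+1) Ms i) :\: F) :&: [set h | wt h <= wt e])
    (ends e).1 (ends e).2.
Proof.
set Hs := \bigcup_(i < f.+1) Ms i.
move=> eF; have [eH|eH] := boolP (e \in Hs).
  by apply: reach_edge1; rewrite !inE lexx andbT -(in_setC e F) eF.
have eG : forall i, (i <= f.+1)%N -> e \in Gseq Ms i.
  elim=> [|i IH] Hi /=; first by rewrite inE.
  rewrite inE IH 1?ltnW // andbT; apply/negP=> eMi; move/negP: eH; apply.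
  by apply/bigcupP; exists (Ordinal Hi).
apply: contrapT => NR.
have ex : forall i : 'I_f.+1, exists h, h \in F /\ h \in Ms i.
  move=> i; have hi : (i <= f)%N by rewrite -ltnS.
  have [p [wp lp]] := cycle_prop (hMs i hi) (eG i (ltnW (ltn_ord i))).
  case hasF: (has (mem F) p).
    case/hasP: hasF => h hp hF'; exists h; split => //; exact: walk_inX wp hp.
  case: NR; exists p; apply: (walk_restrict wp) => h hp.
  rewrite !inE lp // andbT; apply/andP; split; last first.
    apply/bigcupP; exists i => //; exact: walk_inX wp hp.
  by apply/negP=> hF'; move/negP: hasF; apply; apply/hasP; exists h.
have [phi hphi] := fin_all_exists ex.
have inj : injective phi.
  move=> i j eij; apply: contrapT => nij.
  wlog lij : i j eij nij / (i < j)%N.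
    move=> W; have [l|l|l] := ltngtP i j; first exact: W l.
      by apply: (W j i (esym eij)) => // eq; apply: nij.
    by apply: nij; apply: val_inj.
  have hj : (j <= f)%N by rewrite -ltnS.
  have [[sj _] _] := hMs j hj.
  have : phi j \in Gseq Ms i.+1 by apply: (subsetP (Gseq_mono Ms lij)); apply: (subsetP sj); case: (hphi j).
  by rewrite /= !inE -eij; case: (hphi i) => _ ->.
have : (#|[set phi i | i : 'I_f.+1]| <= #|F|)%N.
  by apply: subset_leq_card; apply/subsetP=> h /imsetP [i _ ->]; case: (hphi i).
rewrite card_imset // card_ord => /leq_trans /(_ hF).
by rewrite ltnn.
Qed.


Lemma find_cut (V E : finType) (ends : E -> V * V) (X Y : {set E}) u v p :
  walk ends X u v p -> ~ reach ends Y u v ->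
  exists2 g, g \in p & ~ reach ends Y (ends g).1 (ends g).2.
Proof.
move=> wp NR; apply: contrapT => H; apply: NR; apply: (reach_closed wp) => g gp.
by apply: contrapT => ng; apply: H; exists g.
Qed.

Unset Implicit Arguments.
Theorem lemma3 (R : realType) (V E : finType) (ends : E -> V * V)
  (w : E -> R) (hw : forall e, 0 < w e) (s : V) (f : nat) (hf : (1 <= f)%N)
  (T : {set E}) (hT : sp_tree ends w s T)
  (dT : V -> R) (hdT : forall u, reach ends T s u -> is_dist ends w T s u (dT u))
  (Ms : nat -> {set E})
  (hMs : forall i, (i <= f)%N -> msf ends (wmod ends w T dT) (Gseq Ms i) (Ms i))
  (F : {set E}) (hF : (#|F| <= f)%N)
  (t : V) (ht : reach ends (~: F) s t)
  (pi : seq E) (hpi : gpath ends (~: F) s t pi)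
  (hpimin : forall q, walk ends (~: F) s t q -> wlen w pi <= wlen w q)
  (M : {set E})
  (hM : msf ends (wmod ends w T dT) ((\bigcup_(i < f.+1) Ms i) :\: F) M)
  (pi' : seq E) (hpi' : gpath ends M s t pi') :
  forall e', e' \in pi' -> new_edge ends T F e' ->
    wmod ends w T dT e' <=
    \big[Num.max/0]_(e <- pi | `[< new_edge ends T F e >]) wmod ends w T dT e.
Proof.
move=> e' e'p _.
set wt := wmod ends w T dT.
set B := \big[Num.max/0]_(e <- pi | `[< new_edge ends T F e >]) wt e.
set HF := (\bigcup_(i < f.+1) Ms i) :\: F.
have B0 : 0 <= B by apply: bigmax_ge_id.
have lowB : forall x, x <= B ->
    HF :&: [set h | wt h <= x] \subset HF :&: [set h | wt h <= B].
  move=> x xB; apply/subsetP=> h; rewrite !inE => /andP[-> hx] /=.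
  exact: le_trans hx xB.
have wpi := gpath_walk hpi.
have step : forall h, h \in pi ->
    reach ends (HF :&: [set h | wt h <= B]) (ends h).1 (ends h).2.
  move=> h hp; have hF' := walk_inX wpi hp.
  have [nh|nn] := pselect (new_edge ends T F h).
    apply: reach_sub (bottleneck hMs hF hF'); apply: lowB.
    by apply: le_bigmax_seq => //; apply/asboolP.
  have [p wp] : reach ends (T :\: F) (ends h).1 (ends h).2 by apply: contrapT.
  apply: (reach_closed wp) => k kp; have := walk_inX wp kp; rewrite inE => /andP[kF kT].
  apply: reach_sub (bottleneck hMs hF (e := k) _); last by rewrite inE.
  by apply: lowB; rewrite /wt /wmod kT.
have rst : reach ends (HF :&: [set h | wt h <= B]) s t := reach_closed wpi step.
have [[_ [AM _]] _] := hM.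
have NR := gpath_avoid AM hpi' e'p.
have [W wW] := rst.
have [g gW ng] := find_cut wW NR.
have := walk_inX wW gW; rewrite inE => /andP[gHF]; rewrite inE => gB.
apply: le_trans gB.
exact: (msf_exchange hM (walk_inX (gpath_walk hpi') e'p) gHF ng).
Qed.
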